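(* Let $\mathcal{L}:\mathbb{R}^d\to\mathbb{R}$ be differentiable with $\nabla\mathcal{L}$ Lipschitz continuous with constant $L$. Run full-batch MoFO with $\beta_1<\sqrt{\beta_2}<1$, $\epsilon=0$ and learning rates $\eta_t=\eta/\sqrt t$ ($\eta>0$). Then for every iteration $t\ge1$, $$\left\|\frac{m_t}{1-\beta_1^t}-g_t\right\|_1\le\frac{2\sqrt2\,\beta_1\sqrt d\,LC\eta}{(1-\beta_1)^2\sqrt t},$$ where $C=\dfrac{\sqrt{d\cdot(\alpha\%)+B}}{\sqrt{1-\beta_2}\,(1-\beta_1/\sqrt{\beta_2})}$.
   Context: The coordinates of $\mathbb{R}^d$ are partitioned into $B$ blocks of sizes $d_1,\dots,d_B$ with $\sum_kd_k=d$. Fix $\alpha\%\in(0,1]$. For $z\in\mathbb{R}^d$, $\texttt{FLT}_\alpha(z)\in\{0,1\}^d$ equals, in each block $k$, $1$ exactly on a set of $\lceil d_k\cdot\alpha\%\rceil$ indices with the largest absolute values of $z$ within that block (ties broken in favour of smaller indices), and $0$ elsewhere. Full-batch MoFO with $\beta_1,\beta_2\in(0,1)$, learning rates $\eta_t>0$, initial point $\theta_0$: $m_0=v_0=0$; for $t\ge1$, $g_t=\nabla\mathcal{L}(\theta_{t-1})$, $m_t=\beta_1m_{t-1}+(1-\beta_1)g_t$, $v_t=\beta_2v_{t-1}+(1-\beta_2)g_t\odot g_t$, $\hat m_t=m_t/(1-\beta_1^t)$, $\hat v_t=v_t/(1-\beta_2^t)$, $\theta_t=\theta_{t-1}-\eta_t(\hat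 m_t\odot\texttt{FLT}_\alpha(m_t))/\sqrt{\hat v_t}$ entrywise ($\epsilon=0$: no additive constant in the denominator; a quotient with $\hat v_{i,t}=0$ is taken as $0$). *)

(* Defs.v *)
From HB Require Import structures.
From mathcomp Require Import all_boot all_order all_algebra.
From mathcomp Require Import all_classical all_reals all_analysis.
Set Implicit Arguments. Unset Strict Implicit. Unset Printing Implicit Defensive.
Import Order.TTheory GRing.Theory Num.Theory.
Import numFieldNormedType.Exports.
Local Open Scope ring_scope.

Section MoFO.
Variables (R : realType) (d B : nat).

Definition norm2 (x : 'rV[R]_d) : R := Num.sqrt (\sum_(i < d) (x 0 i) ^+ 2).
Definition norm1 (x : 'rV[R]_d) : R := \sum_(i < d) `|x 0 i|.

Definition blk_size (blk : 'I_d -> 'I_B) (k : 'I_B) : nat := #|[pred i | blk i == k]|.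

Definition blk_rank (blk : 'I_d -> 'I_B) (z : 'rV[R]_d) (i : 'I_d) : nat :=
  #|[pred j : 'I_d | (blk j == blk i) &&
       ((`|z 0 i| < `|z 0 j|) || ((`|z 0 j| == `|z 0 i|) && (j < i)%N))]|.

(* FLT_alpha(z)_i = 1 iff i is among the ceil(d_k * alpha) indices of its block
   k with the largest |z| (ties to smaller indices). *)
Definition FLT (blk : 'I_d -> 'I_B) (alpha : R) (z : 'rV[R]_d) (i : 'I_d) : bool :=
  ((blk_rank blk z i)%:Z < Num.ceil ((blk_size blk (blk i))%:R * alpha))%R.

(* Full-batch MoFO: mofo t = (theta_t, m_t, v_t), with epsilon = 0 and
   learning rates lr t (t >= 1); G is the gradient map. *)
Fixpoint mofo (G : 'rV[R]_d -> 'rV[R]_d) (blk : 'I_d -> 'I_B) (alpha b1 b2 : R)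
    (lr : nat -> R) (theta0 : 'rV[R]_d) (t : nat)
    : 'rV[R]_d * 'rV[R]_d * 'rV[R]_d :=
  match t with
  | 0%N => (theta0, 0, 0)
  | t'.+1 =>
      let '(th, m, v) := mofo G blk alpha b1 b2 lr theta0 t' in
      let g := G th in
      let m' := b1 *: m + (1 - b1) *: g in
      let v' := b2 *: v + (1 - b2) *: \row_i (g 0 i ^+ 2) in
      let mh := (1 - b1 ^+ t)^-1 *: m' in
      let vh := (1 - b2 ^+ t)^-1 *: v' in
      let th' := th - lr t *: \row_i
          (if vh 0 i == 0 then 0
           else (if FLT blk alpha m' i then mh 0 i else 0) / Num.sqrt (vh 0 i)) in
      (th', m', v')
  end.

Definition mofo_theta G blk alpha b1 b2 lr theta0 t :=
  (mofo G blk alpha b1 b2 lr theta0 t).1.1.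
Definition mofo_m G blk alpha b1 b2 lr theta0 t :=
  (mofo G blk alpha b1 b2 lr theta0 t).1.2.

End MoFO.

(* Main.v *)
Require Import Defs.
From HB Require Import structures.
From mathcomp Require Import all_boot all_order all_algebra.
From mathcomp Require Import all_classical all_reals all_analysis.
From mathcomp Require Import ring lra.
Import Order.TTheory GRing.Theory Num.Theory.
Import numFieldNormedType.Exports.
Local Open Scope ring_scope.

Lemma eqW (R : realType) (a b : R) : a = b -> a <= b.
Proof. by move=> ->. Qed.

Section Aux.
Variable R : realType.

Lemma CS n (a b : 'I_n -> R) :
  (\sum_i a i * b i) ^+ 2 <= (\sum_i a i ^+ 2) * (\sum_i b i ^+ 2).
Proof.
have H0 : 0 <= \sum_i \sum_j (a i * b j - a j * b i) ^+ 2.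
  by apply: sumr_ge0 => i _; apply: sumr_ge0 => j _; exact: sqr_ge0.
have E : \sum_i \sum_j (a i * b j - a j * b i) ^+ 2 =
   2 * ((\sum_i a i ^+ 2) * (\sum_i b i ^+ 2) - (\sum_i a i * b i) ^+ 2).
  have E1 : forall i j, (a i * b j - a j * b i) ^+ 2 =
     a i ^+ 2 * b j ^+ 2 + a j ^+ 2 * b i ^+ 2 - 2 * ((a i * b i) * (a j * b j)).
    by move=> i j; ring.
  under eq_bigr => i _ do under eq_bigr => j _ do rewrite E1.
  have P1 : forall (f g : 'I_n -> R), \sum_i \sum_j f i * g j = (\sum_i f i) * (\sum_i g i).
    move=> f g; rewrite mulr_suml; apply: eq_bigr => i _; by rewrite mulr_sumr.
  under eq_bigr => i _ do rewrite big_split /= sumrN big_split /=.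
  rewrite big_split /= sumrN big_split /=.
  have P2 : forall (f g : 'I_n -> R), \sum_i \sum_j f j * g i = (\sum_i f i) * (\sum_i g i).
    by move=> f g; rewrite exchange_big /= P1.
  rewrite P1 P2.
  under eq_bigr => i _ do rewrite -mulr_sumr.
  rewrite -mulr_sumr P1 mulrC; ring.
rewrite E in H0; rewrite -subr_ge0; by rewrite pmulr_rge0 in H0.
Qed.

Lemma CS_sqrt n (a b : 'I_n -> R) :
  \sum_i a i * b i <= Num.sqrt (\sum_i a i ^+ 2) * Num.sqrt (\sum_i b i ^+ 2).
Proof.
have hA : 0 <= \sum_i a i ^+ 2 by apply: sumr_ge0 => i _; exact: sqr_ge0.
rewrite -sqrtrM //.
apply: (le_trans (ler_norm _)).
rewrite -sqrtr_sqr; apply: ler_wsqrtr; exact: CS.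
Qed.

Variable d : nat.

Lemma norm2_ge0 (x : 'rV[R]_d) : 0 <= norm2 x.
Proof. exact: sqrtr_ge0. Qed.

Lemma norm2D (x y : 'rV[R]_d) : norm2 (x + y) <= norm2 x + norm2 y.
Proof.
rewrite /norm2.
have hA : 0 <= \sum_i (x 0 i) ^+ 2 by apply: sumr_ge0 => i _; exact: sqr_ge0.
have hB : 0 <= \sum_i (y 0 i) ^+ 2 by apply: sumr_ge0 => i _; exact: sqr_ge0.
rewrite -[X in _ <= X]ger0_norm ?addr_ge0 ?sqrtr_ge0 // -sqrtr_sqr.
apply: ler_wsqrtr.
have E : \sum_i ((x + y) 0 i) ^+ 2 = \sum_i (x 0 i) ^+ 2 + \sum_i (y 0 i) ^+ 2
   + 2 * \sum_i x 0 i * y 0 i.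
  rewrite mulr_sumr -!big_split /=; apply: eq_bigr => i _; rewrite !mxE; ring.
rewrite E sqrrD !sqr_sqrtr //.
have := CS_sqrt _ (fun i => x 0 i) (fun i => y 0 i) => /= h.
lra.
Qed.

Lemma norm2Z c (x : 'rV[R]_d) : norm2 (c *: x) = `|c| * norm2 x.
Proof.
rewrite /norm2 -sqrtr_sqr -sqrtrM ?sqr_ge0 //; congr Num.sqrt.
rewrite mulr_sumr; apply: eq_bigr => i _; rewrite !mxE; ring.
Qed.

Lemma norm2B (x y : 'rV[R]_d) : norm2 (x - y) = norm2 (y - x).
Proof. by rewrite -opprB -scaleN1r norm2Z normrN1 mul1r. Qed.

Lemma norm1Z c (x : 'rV[R]_d) : norm1 (c *: x) = `|c| * norm1 x.
Proof. rewrite /norm1 mulr_sumr; apply: eq_bigr => i _; by rewrite !mxE normrM. Qed.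

Lemma norm1_le (x : 'rV[R]_d) : norm1 x <= Num.sqrt d%:R * norm2 x.
Proof.
rewrite /norm1 /norm2 mulrC.
have := CS_sqrt _ (fun i => `|x 0 i|) (fun i => 1) => /=.
under eq_bigr => i _ do rewrite mulr1.
under [X in _ <= _ * Num.sqrt X]eq_bigr => i _ do rewrite expr1n.
under [X in _ <= Num.sqrt X * _]eq_bigr => i _ do rewrite real_normK ?num_real //.
by rewrite sumr_const card_ord.
Qed.

End Aux.
Arguments norm2D {R d}. Arguments norm2Z {R d}. Arguments norm2B {R d}.
Arguments norm1Z {R d}. Arguments norm1_le {R d}. Arguments norm2_ge0 {R d}.


Section Seq.
Variable R : realType.

Definition Bs (x : R) (t : nat) : R := \sum_(j < t) x ^+ (t - j) / Num.sqrt j%:R.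
Definition Hs (x : R) (t : nat) : R := \sum_(j < t) x ^+ (t - j) * ((t - j)%:R + 2).

Lemma Bs_rec x t : Bs x t.+1 = x * (Bs x t + (Num.sqrt t%:R)^-1).
Proof.
rewrite /Bs big_ord_recr /= subSnn expr1 mulrDr mulr_sumr; congr (_ + _).
apply: eq_bigr => j _; rewrite subSn; last exact: ltnW (ltn_ord j).
by rewrite exprS mulrA.
Qed.

Lemma Bs_ge0 x t : 0 <= x -> 0 <= Bs x t.
Proof.
move=> hx0'.
apply: sumr_ge0 => j _; apply: mulr_ge0; first exact: exprn_ge0.
by rewrite invr_ge0 sqrtr_ge0.
Qed.

Lemma Hs_rec x t : Hs x t.+1 = Hs x t + x ^+ t.+1 * (t%:R + 3).
Proof.
rewrite /Hs big_ord_recl /= subn0 addrC; congr (_ + _).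
  by rewrite -addn1 natrD; congr (_ * _); ring.
Qed.

Lemma Hs_closed x t : (1 - x) ^+ 2 * Hs x t =
   3 * x - 2 * x ^+ 2 - x ^+ t.+1 * (1 + (t%:R + 2) * (1 - x)).
Proof.
elim: t => [|t IH]; first by rewrite /Hs big_ord0; ring.
rewrite Hs_rec mulrDr IH -addn1 natrD !exprS; ring.
Qed.

Lemma Hs_le t x : 0 < x -> x < 1 -> Hs x t <= 3 * x / (1 - x) ^+ 2.
Proof.
move=> hx0 hx1; have hx0' := ltW hx0.
have h1 : 0 < (1 - x) ^+ 2 by apply: exprn_gt0; lra.
rewrite ler_pdivlMr // mulrC Hs_closed.
have : 0 <= x ^+ t.+1 * (1 + (t%:R + 2) * (1 - x)).
  apply: mulr_ge0; first exact: exprn_ge0.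
  have : 0 <= t%:R :> R by [].
  nra.
have : 0 <= x ^+ 2 by apply: sqr_ge0.
lra.
Qed.

Lemma Bs_bound x t : 0 < x -> x < 1 -> (1 <= t)%N ->
  Bs x t <= 2 * Num.sqrt 2 * x / ((1 - x) ^+ 2 * Num.sqrt t%:R).
Proof.
move=> hx0 hx1 t1; have hx0' := ltW hx0.
have st : 0 < Num.sqrt t%:R :> R by rewrite sqrtr_gt0 ltr0n.
have h1 : 0 < (1 - x) ^+ 2 by apply: exprn_gt0; lra.
have key : Num.sqrt t%:R * Bs x t <= Hs x t / 2.
  rewrite /Bs /Hs mulr_sumr mulr_suml; apply: ler_sum => j _.
  case: (posnP j) => [->|j0].
    rewrite sqrtr0 invr0 mulr0 mulr0.
    apply: mulr_ge0; last lra.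
    apply: mulr_ge0; first exact: exprn_ge0.
    have : 0 <= (t - 0)%:R :> R by [].
    lra.
  rewrite mulrCA -mulrA; apply: ler_wpM2l; first exact: exprn_ge0.
  have sj : 0 < Num.sqrt j%:R :> R by rewrite sqrtr_gt0 ltr0n.
  rewrite ler_pdivrMr // [X in _ <= X]mulrC.
  set k := (t - j)%N.
  have tE : t = (j + k)%N by rewrite /k subnKC // ltnW.
  apply: (le_trans (y := Num.sqrt (((k%:R + 2) / 2) ^+ 2 * j%:R))); last first.
    rewrite sqrtrM ?sqr_ge0 // sqrtr_sqr ger0_norm //.
    have : 0 <= k%:R :> R by [].
    move=> hk; clear -hk; lra.
  apply: ler_wsqrtr.
  have -> : t%:R = j%:R + k%:R :> R by rewrite {1}tE natrD.
  have hj : 1 <= j%:R :> R by rewrite ler1n.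
  have hk : 0 <= k%:R :> R by [].
  nra.
have hH := Hs_le t x hx0 hx1.
have s2 : 1 <= Num.sqrt 2 :> R.
  by rewrite -{1}sqrtr1 ler_sqrt // ler1n.
have hB : Bs x t <= (3 * x / (1 - x) ^+ 2 / 2) / Num.sqrt t%:R.
  rewrite ler_pdivlMr // mulrC; apply: (le_trans key).
  by rewrite ler_pM2r.
apply: (le_trans hB).
have E : (3 * x / (1 - x) ^+ 2 / 2) / Num.sqrt t%:R
   = (3 / 2 * x) / ((1 - x) ^+ 2 * Num.sqrt t%:R).
  field; rewrite lt0r_neq0 // subr_eq0; apply/eqP => h1x; by move: hx1; rewrite -h1x ltxx.
rewrite E ler_pM2r ?invr_gt0 ?mulr_gt0 //.
- clear -s2 hx0; nra.
- by rewrite subr_gt0.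
- by rewrite subr_gt0.
Qed.
End Seq.
Arguments Bs {R}. Arguments Hs {R}. Arguments Bs_rec {R}. Arguments Bs_ge0 {R}.
Arguments Bs_bound {R}.


Definition prc (R : realType) (d : nat) (z : 'rV[R]_d) (j i : 'I_d) : bool :=
  (`|z 0 i| < `|z 0 j|) || ((`|z 0 j| == `|z 0 i|) && (j < i)%N).

Arguments prc {R d}.

Lemma prc_irr (R : realType) d (z : 'rV[R]_d) i : prc z i i = false.
Proof. by rewrite /prc ltxx ltnn andbF. Qed.

Lemma prc_trans (R : realType) d (z : 'rV[R]_d) i j k :
  prc z k j -> prc z j i -> prc z k i.
Proof.
rewrite /prc => /orP [h1|/andP [/eqP e1 h1]] /orP [h2|/andP [/eqP e2 h2]].
- by rewrite (lt_trans h2 h1).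
- by rewrite -e2 h1.
- by rewrite e1 h2.
- by rewrite e1 e2 eqxx (ltn_trans h1 h2) orbT.
Qed.

Lemma prc_total (R : realType) d (z : 'rV[R]_d) i j :
  i != j -> prc z i j || prc z j i.
Proof.
move=> ij; rewrite /prc.
case: (ltgtP `|z 0 i| `|z 0 j|) => h; rewrite ?orbT //.
rewrite /=.
case: (ltngtP i j) => // e.
by rewrite (val_inj e) eqxx in ij.
Qed.

Arguments prc_trans {R d z i j k}.
Arguments prc_total {R d} z {i j}.

Section Cnt.
Variables (R : realType) (d B : nat) (blk : 'I_d -> 'I_B) (z : 'rV[R]_d).

Lemma rank_lt i j : blk j = blk i -> prc z j i ->
  (blk_rank blk z j < blk_rank blk z i)%N.
Proof.
move=> bji pji; apply: proper_card; rewrite properE; apply/andP; split.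
  apply/fintype.subsetP => k; rewrite !inE => /andP [/eqP bk pk].
  by rewrite bk bji eqxx /=; exact: (prc_trans pk pji).
apply/fintype.subsetPn; exists j; rewrite !inE.
  by rewrite bji eqxx /=; exact: pji.
by rewrite -/(prc z j j) prc_irr andbF.
Qed.

Lemma rank_inj i j : blk i = blk j -> blk_rank blk z i = blk_rank blk z j -> i = j.
Proof.
move=> bij e; apply/eqP; apply/negPn/negP => ij.
case/orP: (prc_total z ij) => h.
  by have := @rank_lt j i bij h; rewrite e ltnn.
by have := @rank_lt i j (esym bij) h; rewrite e ltnn.
Qed.

Lemma card_lt (n : nat) k :
  (#|[pred i | (blk i == k) && (blk_rank blk z i < n)%N]| <= n)%N.
Proof.
rewrite cardE -(size_map (blk_rank blk z)) -[X in (_ <= X)%N](size_iota 0 n).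
apply: uniq_leq_size.
  rewrite map_inj_in_uniq ?enum_uniq // => i j.
  rewrite !mem_enum !inE => /andP [/eqP bi _] /andP [/eqP bj _] e.
  by apply: rank_inj => //; rewrite bi bj.
move=> r /mapP [i]; rewrite mem_enum inE => /andP [_ hi] ->.
by rewrite mem_iota.
Qed.

Lemma card_FLT_blk alpha k : 0 <= alpha ->
  (#|[set i | (blk i == k) && FLT blk alpha z i]|)%:R
    <= (blk_size blk k)%:R * alpha + 1 :> R.
Proof.
move=> a0.
set x := (blk_size blk k)%:R * alpha.
have x0 : 0 <= x by rewrite mulr_ge0.
have [n hn] : exists n : nat, Num.ceil x = n%:Z.
  exists `|Num.ceil x|%N; rewrite gez0_abs // ceil_ge0.
  by apply: lt_le_trans x0; rewrite ltrN10.
have hc : (#|[set i | (blk i == k) && FLT blk alpha z i]| <= n)%N.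
  apply: leq_trans (card_lt n k); apply: subset_leq_card.
  apply/fintype.subsetP => i; rewrite !inE => /andP [/eqP bk hF].
  rewrite bk eqxx /=; move: hF; rewrite /FLT bk -/x hn.
  by rewrite ltz_nat.
apply: (le_trans (y := n%:R)); first by rewrite ler_nat.
have := ceilB1_lt x; rewrite intrB hn -pmulrn => h.
by apply: ltW; rewrite -ltrBlDr.
Qed.

Lemma sum_FLT alpha : 0 <= alpha ->
  \sum_i (FLT blk alpha z i)%:R <= d%:R * alpha + B%:R :> R.
Proof.
move=> a0.
rewrite (partition_big blk predT) //=.
have E : forall k, \sum_(i | true && (blk i == k)) (FLT blk alpha z i)%:R
    = (#|[set i | (blk i == k) && FLT blk alpha z i]|)%:R :> R.
  move=> k; rewrite -sum1dep_card natr_sum big_mkcond [RHS]big_mkcond /=.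
  by apply: eq_bigr => i _; case: (blk i == k); case: (FLT blk alpha z i).
under eq_bigr => k _ do rewrite E.
apply: (le_trans (ler_sum _ (fun k _ => card_FLT_blk alpha k a0))).
rewrite big_split /= sumr_const card_ord -mulr_suml.
have Ed : \sum_(k < B) ((blk_size blk k)%:R : R) = d%:R.
  rewrite -natr_sum; congr (_%:R).
  rewrite -[in RHS](card_ord d) -sum1_card (partition_big blk predT) //=.
  apply: eq_bigr => k _; rewrite sum1dep_card /blk_size.
  by apply: eq_card => i; rewrite !inE.
by rewrite Ed.
Qed.
End Cnt.

Lemma sq_split (R : realType) (a b l : R) : 0 < l -> l < 1 ->
  (a + b) ^+ 2 <= a ^+ 2 / l + b ^+ 2 / (1 - l).
Proof.
move=> l0 l1.
have l1' : 0 < 1 - l by rewrite subr_gt0.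
have E : a ^+ 2 / l + b ^+ 2 / (1 - l) - (a + b) ^+ 2
   = (a * (1 - l) - b * l) ^+ 2 / (l * (1 - l)).
  by field; rewrite !lt0r_neq0.
rewrite -subr_ge0 E; apply: divr_ge0; first exact: sqr_ge0.
by apply: mulr_ge0; apply: ltW.
Qed.

Lemma aux_sq (R : realType) (X Y : R) : 0 < X -> X <= Y -> X ^+ 2 <= Y ^+ 2.
Proof. move=> *; nra. Qed.

Lemma aux_g (R : realType) (g : R) : 0 < g -> g < 1 -> (1 - g) ^+ 2 <= 1 - g ^+ 2.
Proof. move=> *; nra. Qed.

Section M.
Variables (R : realType) (d B : nat) (G : 'rV[R]_d -> 'rV[R]_d) (blk : 'I_d -> 'I_B)
  (alpha b1 b2 : R) (lr : nat -> R) (theta0 : 'rV[R]_d).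

Let P t := mofo G blk alpha b1 b2 lr theta0 t.
Definition th t := (P t).1.1.
Definition mm t := (P t).1.2.
Definition vv t := (P t).2.

Definition U t : 'rV[R]_d :=
  let m' := mm t.+1 in
  let vh := (1 - b2 ^+ t.+1)^-1 *: vv t.+1 in
  let mh := (1 - b1 ^+ t.+1)^-1 *: m' in
  \row_i (if vh 0 i == 0 then 0
          else (if FLT blk alpha m' i then mh 0 i else 0) / Num.sqrt (vh 0 i)).

Lemma mS t : mm t.+1 = b1 *: mm t + (1 - b1) *: G (th t).
Proof. by rewrite /mm /th /P /=; case: (mofo _ _ _ _ _ _ _ t) => [[]]. Qed.

Lemma vS t : vv t.+1 = b2 *: vv t + (1 - b2) *: \row_i (G (th t) 0 i ^+ 2).
Proof. by rewrite /vv /th /P /=; case: (mofo _ _ _ _ _ _ _ t) => [[]]. Qed.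

Lemma thS t : th t.+1 = th t - lr t.+1 *: U t.
Proof.
rewrite /U /vv /mm /th /P /=; by case: (mofo _ _ _ _ _ _ _ t) => [[]].
Qed.

Lemma mm0 : mm 0 = 0. Proof. by []. Qed.
Lemma vv0 : vv 0 = 0. Proof. by []. Qed.


Lemma inv_mv (hx0 : 0 < b1) (hx1 : b1 < 1) (hy0 : 0 < b2) (hy1 : b2 < 1)
  (hxy : b1 < Num.sqrt b2) t i :
  0 <= vv t 0 i /\ (mm t 0 i) ^+ 2 <=
     (1 - b1) ^+ 2 / ((1 - b2) * (1 - (b1 / Num.sqrt b2) ^+ 2)) * vv t 0 i.
Proof.
set s := Num.sqrt b2.
have s0 : 0 < s by rewrite sqrtr_gt0.
have s2 : s ^+ 2 = b2 by rewrite sqr_sqrtr // ltW.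
set g := b1 / s.
have g0 : 0 < g by rewrite divr_gt0.
have g1 : g < 1 by rewrite ltr_pdivrMr // mul1r.
have l0 : 0 < g ^+ 2 by rewrite exprn_gt0.
have l1 : g ^+ 2 < 1 by rewrite expr_lt1 // ltW.
have l1' : 0 < 1 - g ^+ 2 by rewrite subr_gt0.
have y1' : 0 < 1 - b2 by rewrite subr_gt0.
set K := (1 - b1) ^+ 2 / ((1 - b2) * (1 - g ^+ 2)).
have K0 : 0 <= K by apply: divr_ge0; [exact: sqr_ge0| apply: mulr_ge0; exact: ltW].
elim: t => [|t [IH1 IH2]]; first by rewrite mm0 vv0 mxE mulr0 expr0n /=.
rewrite mS vS !mxE.
set m := mm t 0 i; set v := vv t 0 i; set gg := G (th t) 0 i.
split.
  apply: addr_ge0; apply: mulr_ge0; try exact: ltW; try done; exact: sqr_ge0.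
have hh := sq_split _ (b1 * m) ((1 - b1) * gg) _ l0 l1. apply: (le_trans hh).
have E1 : (b1 * m) ^+ 2 / g ^+ 2 = b2 * m ^+ 2.
  rewrite /g -s2; field; rewrite !lt0r_neq0 //.
have E2 : ((1 - b1) * gg) ^+ 2 / (1 - g ^+ 2) = K * ((1 - b2) * gg ^+ 2).
  rewrite /K; field; rewrite !lt0r_neq0 //.
rewrite E1 E2 mulrDr; apply: lerD => //.
rewrite [K * _]mulrCA; apply: ler_wpM2l; [exact: ltW | done].
Qed.

Lemma U_sq (hx0 : 0 < b1) (hx1 : b1 < 1) (hy0 : 0 < b2) (hy1 : b2 < 1)
  (hxy : b1 < Num.sqrt b2) t i :
  (U t 0 i) ^+ 2 <= (FLT blk alpha (mm t.+1) i)%:R /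
     ((1 - b2) * (1 - b1 / Num.sqrt b2) ^+ 2).
Proof.
have [IH1 IH2] := inv_mv hx0 hx1 hy0 hy1 hxy t.+1 i.
set s := Num.sqrt b2.
have s0 : 0 < s by rewrite sqrtr_gt0.
have s2 : s ^+ 2 = b2 by rewrite sqr_sqrtr // ltW.
set g := b1 / s.
have g0 : 0 < g by rewrite divr_gt0.
have g1 : g < 1 by rewrite ltr_pdivrMr // mul1r.
have l1' : 0 < 1 - g ^+ 2 by rewrite subr_gt0 expr_lt1 // ltW.
have y1' : 0 < 1 - b2 by rewrite subr_gt0.
have x1' : 0 < 1 - b1 by rewrite subr_gt0.
have g1' : 0 < 1 - g by rewrite subr_gt0.
set K := (1 - b1) ^+ 2 / ((1 - b2) * (1 - g ^+ 2)) in IH2.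
have K0 : 0 <= K by apply: divr_ge0; [exact: sqr_ge0| apply: mulr_ge0; exact: ltW].
have den0 : 0 < (1 - b2) * (1 - g) ^+ 2 by rewrite mulr_gt0 // exprn_gt0.
rewrite /U mxE.
case: eqP => [_|vh0]; first by rewrite expr0n /= divr_ge0 // ltW.
case: ifP => hF; last by rewrite mul0r expr0n /= mul0r lexx.
rewrite mul1r !mxE; rewrite !mxE in vh0.
set m' := mm t.+1 0 i in IH2 *; set v' := vv t.+1 0 i in IH1 IH2 vh0 *.
have ys0 : 0 < 1 - b2 ^+ t.+1.
  by rewrite subr_gt0 exprn_ilt1 // ltW.
have ys1 : 1 - b2 ^+ t.+1 <= 1 by rewrite lerBlDr lerDl exprn_ge0 // ltW.
have xs1 : 1 - b1 <= 1 - b1 ^+ t.+1.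
  by rewrite lerD2l lerN2 exprS ler_piMr ?exprn_ile1 // ltW.
have xs0 : 0 < 1 - b1 ^+ t.+1 by apply: lt_le_trans xs1.
have v0 : 0 < v'.
  rewrite lt_def IH1 andbT; apply/eqP => h; apply: vh0; by rewrite h mulr0.
have vh_pos : 0 < (1 - b2 ^+ t.+1)^-1 * v' by rewrite mulr_gt0 // invr_gt0.
rewrite expr_div_n sqr_sqrtr; last exact: ltW.
have E : ((1 - b1 ^+ t.+1)^-1 * m') ^+ 2 / ((1 - b2 ^+ t.+1)^-1 * v')
   = m' ^+ 2 * ((1 - b2 ^+ t.+1) / ((1 - b1 ^+ t.+1) ^+ 2 * v')).
  by field; rewrite !lt0r_neq0.
rewrite E.
have c0 : 0 <= (1 - b2 ^+ t.+1) / ((1 - b1 ^+ t.+1) ^+ 2 * v').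
  by rewrite divr_ge0 ?ltW // mulr_gt0 // exprn_gt0.
apply: (le_trans (ler_wpM2r c0 IH2)).
have E2 : K * v' * ((1 - b2 ^+ t.+1) / ((1 - b1 ^+ t.+1) ^+ 2 * v'))
   = K * ((1 - b2 ^+ t.+1) / (1 - b1 ^+ t.+1) ^+ 2).
  by field; rewrite !lt0r_neq0.
rewrite E2.
have h3 : (1 - b2 ^+ t.+1) / (1 - b1 ^+ t.+1) ^+ 2 <= 1 / (1 - b1) ^+ 2.
  rewrite ler_pdivrMr ?exprn_gt0 // mulrAC ler_pdivlMr ?exprn_gt0 // mul1r.
  apply: (le_trans (y := (1 - b1) ^+ 2)); first by rewrite ler_piMl // sqr_ge0.
  exact: aux_sq.
apply: (le_trans (ler_wpM2l K0 h3)).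
have E3 : K * (1 / (1 - b1) ^+ 2) = 1 / ((1 - b2) * (1 - g ^+ 2)).
  by rewrite /K; field; rewrite !lt0r_neq0.
rewrite E3 div1r lef_pV2 ?posrE ?mulr_gt0 ?exprn_gt0 //.
rewrite ler_pM2l //.
exact: aux_g.
Qed.

Lemma normU (hx0 : 0 < b1) (hx1 : b1 < 1) (hy0 : 0 < b2) (hy1 : b2 < 1)
  (hxy : b1 < Num.sqrt b2) (ha : 0 <= alpha) t :
  norm2 (U t) <= Num.sqrt (d%:R * alpha + B%:R) /
           (Num.sqrt (1 - b2) * (1 - b1 / Num.sqrt b2)).
Proof.
set g := b1 / Num.sqrt b2.
have s0 : 0 < Num.sqrt b2 by rewrite sqrtr_gt0.
have g1 : g < 1 by rewrite ltr_pdivrMr // mul1r.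
have g1' : 0 < 1 - g by rewrite subr_gt0.
have y1' : 0 < 1 - b2 by rewrite subr_gt0.
set den := (1 - b2) * (1 - g) ^+ 2.
have den0 : 0 < den by rewrite mulr_gt0 // exprn_gt0.
have hS : 0 <= d%:R * alpha + B%:R :> R by rewrite addr_ge0 // mulr_ge0.
apply: (le_trans (y := Num.sqrt ((d%:R * alpha + B%:R) / den))).
  apply: ler_wsqrtr.
  apply: (le_trans (ler_sum _ (fun i _ => U_sq hx0 hx1 hy0 hy1 hxy t i))).
  rewrite -mulr_suml; apply: ler_wpM2r; first by rewrite invr_ge0 ltW.
  exact: sum_FLT.
have den0' : 0 <= den := ltW den0.
have g1'' : 0 <= 1 - g := ltW g1'.
have y1'' : 0 <= 1 - b2 := ltW y1'.
by rewrite sqrtrM // sqrtrV // sqrtrM // sqrtr_sqr ger0_norm.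
Qed.

Lemma th_step (hx0 : 0 < b1) (hx1 : b1 < 1) (hy0 : 0 < b2) (hy1 : b2 < 1)
  (hxy : b1 < Num.sqrt b2) (ha : 0 <= alpha) t : 0 <= lr t.+1 ->
  norm2 (th t.+1 - th t) <= lr t.+1 * (Num.sqrt (d%:R * alpha + B%:R) /
           (Num.sqrt (1 - b2) * (1 - b1 / Num.sqrt b2))).
Proof.
move=> hl.
have -> : th t.+1 - th t = (- lr t.+1) *: U t.
  by rewrite thS scaleNr addrAC subrr add0r.
rewrite norm2Z normrN ger0_norm //; apply: ler_wpM2l => //.
exact: normU.
Qed.

End M.
Arguments th {R d B}. Arguments mm {R d B}. Arguments vv {R d B}. Arguments U {R d B}.
Arguments mS {R d B}. Arguments mm0 {R d B}.
Arguments th_step {R d B G blk alpha b1 b2 lr theta0}.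


Theorem lemma5 (R : realType) (d B : nat) (blk : 'I_d -> 'I_B)
  (Lfun : 'rV[R]_d -> R) (G : 'rV[R]_d -> 'rV[R]_d) (Lip : R)
  (alpha b1 b2 eta : R) (theta0 : 'rV[R]_d)
  (Hblk : forall k : 'I_B, exists i : 'I_d, blk i = k)
  (Hdiff : forall x : 'rV[R]_d, differentiable Lfun x)
  (Hgrad : forall x v : 'rV[R]_d, 'D_v Lfun x = \sum_(i < d) v 0 i * G x 0 i)
  (HLip : forall x y : 'rV[R]_d, norm2 (G x - G y) <= Lip * norm2 (x - y))
  (Halpha : 0 < alpha <= 1)
  (Hb1 : 0 < b1 < 1) (Hb2 : 0 < b2 < 1) (Hb12 : b1 < Num.sqrt b2)
  (Heta : 0 < eta) :
  let lr := fun t : nat => eta / Num.sqrt t%:R in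
  let C := Num.sqrt (d%:R * alpha + B%:R) /
           (Num.sqrt (1 - b2) * (1 - b1 / Num.sqrt b2)) in
  forall t : nat, (1 <= t)%N ->
    norm1 ((1 - b1 ^+ t)^-1 *: mofo_m G blk alpha b1 b2 lr theta0 t
           - G (mofo_theta G blk alpha b1 b2 lr theta0 t.-1))
    <= 2 * Num.sqrt 2 * b1 * Num.sqrt d%:R * Lip * C * eta
       / ((1 - b1) ^+ 2 * Num.sqrt t%:R).
Proof.
move=> lr C t t1.
case/andP: Hb1 => hx0 hx1; case/andP: Hb2 => hy0 hy1; case/andP: Halpha => ha0 ha1.
have ha : 0 <= alpha := ltW ha0.
case: (posnP d) => [d0|dpos].
  have -> : Num.sqrt d%:R = 0 :> R by rewrite d0 sqrtr0.
  rewrite mulr0 !mul0r /norm1 big1 // => -[i hi].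
  by exfalso; rewrite d0 in hi.
have hLip : 0 <= Lip.
  have h := HLip 0 (const_mx 1).
  have hn : 0 < norm2 (0 - const_mx 1 : 'rV[R]_d).
    rewrite /norm2 sqrtr_gt0.
    under eq_bigr => i _ do rewrite !mxE sub0r sqrrN expr1n.
    by rewrite sumr_const card_ord ltr0n.
  by rewrite -(pmulr_lge0 _ hn); apply: le_trans h; exact: norm2_ge0.
have s0 : 0 < Num.sqrt b2 by rewrite sqrtr_gt0.
have g1 : b1 / Num.sqrt b2 < 1 by rewrite ltr_pdivrMr // mul1r.
have C0 : 0 <= C.
  rewrite /C divr_ge0 ?sqrtr_ge0 // mulr_ge0 ?sqrtr_ge0 //.
  by rewrite subr_ge0 ltW.
set x := b1.
set w := Lip * eta * C.
have w0 : 0 <= w by rewrite mulr_ge0 // mulr_ge0 // ltW.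
pose th' := th G blk alpha b1 b2 lr theta0.
pose mm' := mm G blk alpha b1 b2 lr theta0.
pose D t := mm' t - (1 - x ^+ t) *: G (th' t.-1).
have Dbound : forall t, norm2 (D t) <= w * (1 - x ^+ t) * Bs x t.
  elim=> [|s IH].
    have -> : D 0%N = 0 by rewrite /D /mm' mm0 expr0 subrr scale0r subr0.
    rewrite expr0 subrr mulr0 mul0r /norm2 big1 ?sqrtr0 // => i _.
    by rewrite mxE expr0n.
  have DE : D s.+1 = x *: (D s + (1 - x ^+ s) *: (G (th' s.-1) - G (th' s))).
    apply/rowP => i; rewrite /D /mm' /th' mS !mxE /= /x exprS; ring.
  rewrite DE norm2Z ger0_norm; last exact: ltW.
  have hx : 0 <= 1 - x ^+ s by rewrite subr_ge0 exprn_ile1 // ltW.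
  have hdiff : (1 - x ^+ s) * norm2 (G (th' s.-1) - G (th' s))
       <= (1 - x ^+ s) * (w / Num.sqrt s%:R).
    case: s {IH DE hx} => [|s]; first by rewrite expr0 subrr !mul0r.
    apply: ler_wpM2l; first by rewrite subr_ge0 exprn_ile1 // ltW.
    rewrite /=.
    apply: (le_trans (HLip _ _)).
    rewrite norm2B.
    have hl : 0 <= lr s.+1 by rewrite /lr divr_ge0 ?sqrtr_ge0 // ltW.
    have := @th_step R d B G blk alpha b1 b2 lr theta0 hx0 hx1 hy0 hy1 Hb12 ha s hl.
    rewrite -/C => hst.
    apply: (le_trans (ler_wpM2l hLip hst)).
    by rewrite /w /lr; apply: eqW; ring.
  have h2 : norm2 (D s + (1 - x ^+ s) *: (G (th' s.-1) - G (th' s)))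
       <= w * (1 - x ^+ s) * Bs x s + (1 - x ^+ s) * (w / Num.sqrt s%:R).
    apply: (le_trans (norm2D _ _)); apply: lerD => //.
    by rewrite norm2Z ger0_norm.
  apply: (le_trans (ler_wpM2l (ltW hx0) h2)).
  rewrite Bs_rec.
  have hB := Bs_ge0 x s (ltW hx0).
  have hBs := Bs_ge0 x s.+1 (ltW hx0).
  have hxs : x ^+ s.+1 <= x ^+ s by rewrite exprS ler_piMl ?exprn_ge0 // ltW.
  apply: (le_trans (y := w * (1 - x ^+ s) * (x * (Bs x s + (Num.sqrt s%:R)^-1)))).
    by apply: eqW; rewrite /x; ring.
  rewrite -Bs_rec; apply: (ler_wpM2r hBs); apply: (ler_wpM2l w0).
  by rewrite lerD2l lerN2.
have xt : 0 < 1 - x ^+ t.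
  rewrite subr_gt0 (exprn_ilt1 t (ltW hx0) hx1).
  by move: t1; case: (t).
have eqm : mofo_m G blk alpha b1 b2 lr theta0 t = mm' t := erefl.
have eqth : mofo_theta G blk alpha b1 b2 lr theta0 t.-1 = th' t.-1 := erefl.
rewrite eqm eqth.
have E : (1 - x ^+ t)^-1 *: mm' t - G (th' t.-1) = (1 - x ^+ t)^-1 *: D t.
  apply/rowP => i; rewrite /D !mxE; field; exact: lt0r_neq0.
rewrite E norm1Z ger0_norm; last by rewrite invr_ge0 ltW.
have hi : 0 <= (1 - x ^+ t)^-1 by rewrite invr_ge0 ltW.
apply: (le_trans (ler_wpM2l hi (norm1_le _))).
have sd : 0 <= Num.sqrt d%:R :> R by exact: sqrtr_ge0.
apply: (le_trans (ler_wpM2l hi (ler_wpM2l sd (Dbound t)))).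
have -> : (1 - x ^+ t)^-1 * (Num.sqrt d%:R * (w * (1 - x ^+ t) * Bs x t))
    = Num.sqrt d%:R * w * Bs x t.
  by field; exact: lt0r_neq0.
have hb := Bs_bound x t hx0 hx1 t1.
apply: (le_trans (ler_wpM2l (mulr_ge0 sd w0) hb)).
have st : 0 < Num.sqrt t%:R :> R by rewrite sqrtr_gt0 ltr0n.
have x1 : 0 < 1 - b1 by rewrite subr_gt0.
by apply: eqW; rewrite /w /x; field; rewrite !lt0r_neq0.
Qed.
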